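(* Let $K$ be a simplicial complex on the vertex set $[m]$ and let $I\subseteq[m]$. Then the fixed point set $(\mathcal{Z}_K)^{T^I}$ is empty if $I\notin K$, and if $I\in K$ it is $\mathbb{Z}_2$-equivariantly homeomorphic to $\mathcal{Z}_{\operatorname{lk}_K(I)}$, where both carry the complex conjugation $\mathbb{Z}_2$-action.
   Context: The moment-angle complex is $\mathcal{Z}_K=\bigcup_{\sigma\in K}\{(z_1,\ldots,z_m)\in(D^2)^m: |z_i|=1\text{ for } i\notin\sigma\}$, where $D^2$ is the closed unit disc in $\mathbb{C}$. The torus $T^m=(S^1)^m$ acts by coordinatewise multiplication and $T^I=\{t\in T^m: t_i=1 \text{ for } i\notin I\}$ acts by restriction; $\mathbb{Z}_2$ acts by coordinatewise complex conjugation. The link of a face $\sigma$ is $\operatorname{lk}_K(\sigma)=\{\tau\in K:\tau\cap\sigma=\varnothing,\ \tau\cup\sigma\in K\}$, regarded as a simplicial complex on the vertex set $[m]\setminus\sigma$, and $\mathcal{Z}_{\operatorname{lk}_K(I)}\subseteq(D^2)^{[m]\setminus I}$ is formed with respect to that vertex set. *)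

(* Defs.v *)
From HB Require Import structures.
From mathcomp Require Import all_boot all_order all_algebra.
From mathcomp Require Import all_classical all_reals all_analysis.
Set Implicit Arguments. Unset Strict Implicit. Unset Printing Implicit Defensive.
Import Order.TTheory GRing.Theory Num.Theory.
Import numFieldNormedType.Exports.
Local Open Scope classical_set_scope.
Local Open Scope ring_scope.

(* Complex numbers modelled as pairs (Re, Im) of reals, with the product
   topology of R * R (= the usual topology of C). *)
Notation cpx R := (R * R)%type.

Definition cmul (R : realType) (z w : cpx R) : cpx R :=
  (z.1 * w.1 - z.2 * w.2, z.1 * w.2 + z.2 * w.1).
Definition cconj (R : realType) (z : cpx R) : cpx R := (z.1, - z.2).
Definition cone (R : realType) : cpx R := (1, 0).
Definition cnorm2 (R : realType) (z : cpx R) : R := z.1 ^+ 2 + z.2 ^+ 2.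

Definition disc (R : realType) : set (cpx R) := [set z | cnorm2 z <= 1].
Definition circle (R : realType) : set (cpx R) := [set z | cnorm2 z = 1].

Notation pts R V := {ptws V -> (R * R)%type}.

(* simplicial complex on the vertex set V (ghost vertices allowed) *)
Definition is_simplicial_complex (V : finType) (K : {set {set V}}) : Prop :=
  finset.set0 \in K /\ (forall s t : {set V}, s \in K -> t \subset s -> t \in K).

Definition moment_angle (R : realType) (V : finType) (K : {set {set V}})
  : set (pts R V) :=
  [set z | exists2 s, s \in K &
     (forall i, disc (z i)) /\ (forall i, i \notin s -> circle (z i))].

Definition subtorus (R : realType) (V : finType) (I : {set V}) : set (pts R V) :=
  [set t | (forall i, circle (t i)) /\ (forall i, i \notin I -> t i = cone R)].

Definition tact (R : realType) (V : finType) (t z : pts R V) : pts R V :=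
  fun i => cmul (t i) (z i).

Definition conjact (R : realType) (V : finType) (z : pts R V) : pts R V :=
  fun i => cconj (z i).

Definition torus_fixed (R : realType) (V : finType) (K : {set {set V}}) (I : {set V})
  : set (pts R V) :=
  [set z | moment_angle K z /\ (forall t, @subtorus R V I t -> tact t z = z)].

Definition compl_vert (V : finType) (I : {set V}) := {i : V | i \notin I}.

(* link of I in K, as a complex on the vertex set V \ I *)
Definition link (V : finType) (K : {set {set V}}) (I : {set V})
  : {set {set compl_vert I}} :=
  [set t : {set compl_vert I} | (val @: t) :|: I \in K].

Definition Z2_homeomorphic (R : realType) (V W : finType)
  (A : set (pts R V)) (B : set (pts R W)) : Prop :=
  exists (f : pts R V -> pts R W) (g : pts R W -> pts R V),
    (forall x, A x -> B (f x)) /\ (forall y, B y -> A (g y)) /\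
    (forall x, A x -> g (f x) = x) /\ (forall y, B y -> f (g y) = y) /\
    {within A, continuous f} /\ {within B, continuous g} /\
    (forall x, A x -> f (conjact x) = conjact (f x)).

Arguments moment_angle R {V} K.
Arguments torus_fixed R {V} K I.

(* Main.v *)
Require Import Defs.
From HB Require Import structures.
From mathcomp Require Import all_boot all_order all_algebra.
From mathcomp Require Import all_classical all_reals all_analysis.
From mathcomp Require Import lra.
Import numFieldNormedType.Exports.
Local Open Scope classical_set_scope.

Lemma ptws_cvg (U : Type) (V : topologicalType) (F : set_system {ptws U -> V})
  (Ff : Filter F) (f : {ptws U -> V}) :
  (forall i, (fun g : {ptws U -> V} => g i) @ F --> f i) -> F --> f.
Proof.
move=> H; apply/cvg_sup => i.
move=> A /= [_ [[B Bop <-] Bfs sBfA]].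
have /H FB : nbhs (f i) B by apply: open_nbhs_nbhs.
exact: (filterS sBfA FB).
Qed.

Lemma ptws_cont (T : topologicalType) (U : Type) (V : topologicalType) (h : T -> {ptws U -> V}) :
  (forall i, continuous (fun x => h x i)) -> continuous h.
Proof. by move=> H x; apply: ptws_cvg => i; exact: H. Qed.

Lemma ptws_proj (U : eqType) (V : topologicalType) (i : U) :
  continuous (fun g : {ptws U -> V} => g i).
Proof. exact: (@proj_continuous _ (fun=> V) i). Qed.

Section Helpers.
Import Order.TTheory GRing.Theory Num.Theory.
Local Open Scope ring_scope.
Variables (R : realType) (m : nat) (K : {set {set 'I_m}}) (I : {set 'I_m}).

Lemma fixed_zero (z : pts R 'I_m) i : (forall t, @subtorus R _ I t -> tact t z = z) ->
  i \in I -> z i = (0, 0).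
Proof.
move=> H iI.
pose t : pts R 'I_m := fun k => if k == i then (-1, 0) else cone R.
have /(congr1 (fun f => f i)) : tact t z = z.
  apply: H; split => k; rewrite /t.
    case: (k == i); rewrite /circle /cnorm2 /cone /=; by rewrite ?expr0n /= ?sqrrN expr1n addr0.
  by case: eqP => // -> ; rewrite iI.
rewrite /tact /t eqxx /cmul /=.
case: (z i) => a b /= [] ha hb.
have -> : a = 0 by lra.
have -> : b = 0 by lra.
by [].
Qed.

Lemma zero_not_circle : ~ circle ((0, 0) : cpx R).
Proof. by rewrite /circle /cnorm2 /= expr0n /= addr0 => /eqP; rewrite eq_sym oner_eq0. Qed.

Lemma zero_disc : disc ((0, 0) : cpx R).
Proof. by rewrite /disc /cnorm2 /= expr0n /= addr0 ler01. Qed.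

Lemma cmul0 (t : cpx R) : cmul t (0,0) = (0,0).
Proof. by rewrite /cmul /= !mulr0 subr0 addr0. Qed.

Lemma cmul1 (w : cpx R) : cmul (cone R) w = w.
Proof. by case: w => a b; rewrite /cmul /cone /= !mul1r !mul0r subr0 addr0. Qed.

Lemma cconj0 : cconj ((0,0) : cpx R) = (0,0).
Proof. by rewrite /cconj /= oppr0. Qed.

End Helpers.

Theorem lemma3p5 (R : realType) (m : nat) (K : {set {set 'I_m}}) (I : {set 'I_m}) :
  is_simplicial_complex K ->
  (I \notin K -> torus_fixed R K I = set0) /\
  (I \in K -> Z2_homeomorphic (torus_fixed R K I) (moment_angle R (link K I))).
Proof.
move=> [K0 Kclosed].
have fixI : forall z, torus_fixed R K I z -> exists2 s, s \in K &
    [/\ I \subset s, (forall i, disc (z i)) & (forall i, i \notin s -> circle (z i))].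
  move=> z [[s sK [zd zc]] zf]; exists s => //; split => //.
  apply/fintype.subsetP => i iI; apply/negPn/negP => /zc.
  by rewrite (@fixed_zero R m I z i zf iI); apply: zero_not_circle.
split.
  move=> IK; apply/seteqP; split => // z /fixI [s sK [Is _ _]].
  by apply/negP: IK; rewrite negbK; exact: Kclosed sK Is.
move=> IK.
have hp : forall j : (compl_vert I : finType), continuous (fun w : pts R (compl_vert I : finType) => w j).
  by move=> j; exact: ptws_proj.
pose f (z : pts R 'I_m) : pts R (compl_vert I) := fun j => z (val j).
pose g (w : pts R (compl_vert I)) : pts R 'I_m := fun i =>
  if (insub i : option (compl_vert I)) is Some j then w j else (0, 0)%R.
exists f, g; split; [|split; [|split; [|split; [|split; [|split]]]]].
- move=> x /fixI [s sK [Is xd xc]].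
  exists (finset (fun j : compl_vert I => val j \in s)).
    rewrite /link inE; apply: (Kclosed s) => //.
    apply/fintype.subsetP => i; rewrite finset.in_setU => /orP [/imsetP [j] | iI].
      by rewrite inE => js ->.
    by move/fintype.subsetP: Is; apply.
  split => j; first exact: xd.
  by rewrite inE => /xc.
- move=> y [t tK [yd yc]]; rewrite /link inE in tK.
  split.
    exists ((val @: t) :|: I) => //; split => i; rewrite /g.
      by case: insubP => [j _ _|_]; [exact: yd | exact: zero_disc].
    rewrite finset.in_setU negb_or => /andP [nt nI].
    case: insubP => [j _ vj|]; last by rewrite nI.
    apply: yc; apply/negP => jt; move/negP: nt; apply.
    by apply/imsetP; exists j.
  move=> t' [_ t'1]; apply: funext => i; rewrite /tact /g.
  case: insubP => [j ni vj|/negPn iI]; last exact: cmul0.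
  by rewrite t'1 ?cmul1.
- move=> x [_ zf]; apply: funext => i; rewrite /g /f.
  case: insubP => [j _ <-|/negPn iI] //.
  by rewrite (@fixed_zero R m I x i zf iI).
- move=> y _; apply: funext => j; rewrite /f /g.
  by rewrite valK.
- apply: continuous_subspaceT; apply: ptws_cont => j.
  exact: ptws_proj.
- apply: continuous_subspaceT; apply: ptws_cont => i; rewrite /g /=.
  by case: (insub i : option (compl_vert I)) => [j|]; [exact: hp | exact: cst_continuous].
- by [].
Qed.
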